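(* Let $0<k<n$ be integers with $n-2k+2\ge 0$. Then there exists a $k$-splitting of $Q_2^n$ that contains at most two $(n-k)$-faces of any fixed direction.
   Context: $Q_2^n=\{0,1\}^n$. For $0\le m\le n$, an $m$-face of $Q_2^n$ is given by a tuple $a=(a_1,\dots,a_n)\in\{0,1,*\}^n$ with exactly $m$ entries equal to $*$; it denotes the set $\{x\in Q_2^n : x_i=a_i \text{ whenever } a_i\in\{0,1\}\}$. The direction of a face is the set of positions of its asterisks. A $k$-splitting of $Q_2^n$ is a collection of exactly $2^k$ $(n-k)$-faces whose union is $Q_2^n$ (equivalently, a partition of $Q_2^n$ into $(n-k)$-faces). *)

(* Defs.v *)
From mathcomp Require Import all_boot.
Set Implicit Arguments.
Unset Strict Implicit.
Unset Printing Implicit Defensive.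

Definition vertex (n : nat) := {ffun 'I_n -> bool}.

(* A face is a word in {0,1,*}^n; [None] encodes the asterisk *,
   [Some b] encodes the fixed coordinate b. *)
Definition face (n : nat) := {ffun 'I_n -> option bool}.

Definition direction n (a : face n) : {set 'I_n} := [set i | a i == None].

Definition face_dim n (a : face n) : nat := #|direction a|.

Definition face_set n (a : face n) : {set vertex n} :=
  [set x : vertex n | [forall i, if a i is Some b then x i == b else true]].

Definition k_splitting n (k : nat) (S : {set face n}) : Prop :=
  [/\ #|S| = 2 ^ k,
      (forall a, a \in S -> face_dim a = n - k) &
      \bigcup_(a in S) face_set a = [set: vertex n]].

(* Main.v *)
Require Import Defs.
From mathcomp Require Import all_boot zify.
Set Implicit Arguments.
Unset Strict Implicit.
Unset Printing Implicit Defensive.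

Lemma card_face_set n (a : face n) : #|face_set a| = 2 ^ #|direction a|.
Proof.
pose P := fun i : 'I_n => if a i is Some c then pred1 c else predT.
have -> : face_set a = [set x | x \in family P].
  apply/setP => x; rewrite !inE; apply/forallP/familyP => H i; have := H i;
  rewrite /P; by case: (a i).
rewrite cardsE card_family foldrE big_map big_enum /=.
rewrite -prod_nat_const big_mkcond /=.
rewrite [RHS](_ : _ = \prod_(i < n) (if i \in direction a then 2 else 1)) //.
apply: eq_bigr => i _.
rewrite /P /direction inE; case: (a i) => [c|] /=; last by rewrite card_bool.
by rewrite card1.
by rewrite big_mkcond.
Qed.

Definition good (m k : nat) (F : (nat -> bool) -> seq nat) (g : (nat -> bool) -> bool) :=
  [/\ forall b, [&& all (fun i => i < m) (F b), uniq (F b) & size (F b) == k],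
      forall b b', {in F b, b' =1 b} -> F b' =i F b &
      forall b b', F b =i F b' -> g b = g b' -> {in F b, b =1 b'} ].

Definition bit n (v : vertex n) (i : nat) : bool :=
  if insub i is Some o then v o else false.

Lemma bitE n (v : vertex n) (o : 'I_n) : bit v o = v o.
Proof. by rewrite /bit valK. Qed.

Lemma card_inl n (l : seq nat) : all (fun i => i < n) l -> uniq l ->
  #|[set i : 'I_n | val i \in l]| = size l.
Proof.
elim: l => [|x l IH] /=; first by move=> _ _; apply/eqP; rewrite cards_eq0; apply/eqP/setP=> i; rewrite !inE.
case/andP => xn al /andP [xl ul].
have -> : [set i : 'I_n | val i \in x :: l] = Ordinal xn |: [set i : 'I_n | val i \in l].
  by apply/setP => i; rewrite !inE -val_eqE.
by rewrite cardsU1 inE /= xl IH.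
Qed.

Section Generic.
Variables (n m k : nat) (F : (nat -> bool) -> seq nat) (g : (nat -> bool) -> bool).
Hypotheses (Hg : good m k F g) (Hmn : m <= n) (Hkn : k <= n).

Definition fof (v : vertex n) : face n :=
  [ffun i => if val i \in F (bit v) then Some (v i) else None].

Lemma Fn (v : vertex n) i : i \in F (bit v) -> i < n.
Proof.
case: Hg => H1 _ _ Hi; case/and3P: (H1 (bit v)) => /allP al _ _.
exact: leq_trans (al _ Hi) Hmn.
Qed.

Lemma fof_in (v : vertex n) : v \in face_set (fof v).
Proof. by rewrite inE; apply/forallP => i; rewrite ffunE; case: ifP. Qed.

Lemma fof_eq (v w : vertex n) : w \in face_set (fof v) -> fof w = fof v.
Proof.
rewrite inE => /forallP H.
have agree : {in F (bit v), bit w =1 bit v}.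
  move=> i Hi; have iltn := Fn Hi.
  have := H (Ordinal iltn); rewrite ffunE /= Hi => /eqP.
  by rewrite -[i]/(val (Ordinal iltn)) !bitE.
case: Hg => _ H2 _; have E := H2 _ _ agree.
apply/ffunP => o; rewrite !ffunE E; case: ifP => // Hi.
by have := H o; rewrite ffunE Hi => /eqP ->.
Qed.

Lemma fof_dim (v : vertex n) : face_dim (fof v) = n - k.
Proof.
rewrite /face_dim.
have -> : direction (fof v) = ~: [set i : 'I_n | val i \in F (bit v)].
  by apply/setP => i; rewrite !inE ffunE; case: ifP.
case: Hg => H1 _ _; case/and3P: (H1 (bit v)) => al ul /eqP sz.
have := cardsC [set i : 'I_n | val i \in F (bit v)].
have al' : all (fun i => i < n) (F (bit v)) by apply/allP => i Hi; exact: Fn Hi.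
rewrite (card_inl al' ul) sz card_ord.
by move=> H; rewrite -[in RHS]H addKn.
Qed.

Definition Sg := [set fof v | v : vertex n].

Lemma Sg_card : #|Sg| = 2 ^ k.
Proof.
have H : #|[set: vertex n]| = #|Sg| * 2 ^ (n - k).
  rewrite -sum1_card (partition_big fof (mem Sg)); last by move=> v _; apply: imset_f.
  rewrite -sum_nat_const; apply: eq_bigr => a /imsetP [v _ ->].
  rewrite sum1_card -(fof_dim v) -card_face_set; apply: eq_card => w.
  rewrite [LHS]unfold_in /= in_setT /=; apply/eqP/idP; first by move=> <-; exact: fof_in.
  exact: fof_eq.
move: H; rewrite cardsT card_ffun card_bool card_ord.
rewrite -{1}(subnKC Hkn) expnD => /eqP; rewrite eqn_pmul2r ?expn_gt0 //.
by move/eqP.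
Qed.

Lemma Sg_dir D : #|[set a in Sg | direction a == D]| <= 2.
Proof.
pose v0 : vertex n := [ffun => false].
pose h b := fof (odflt v0 [pick v | (direction (fof v) == D) && (g (bit v) == b)]).
apply: (@leq_trans #|h @: [set: bool]|); last by rewrite (leq_trans (leq_imset_card _ _)) // cardsT card_bool.
apply: subset_leq_card; apply/subsetP => a; rewrite inE => /andP [/imsetP [v _ ->] /eqP dv].
apply/imsetP; exists (g (bit v)) => //.
rewrite /h; case: pickP => [w /andP [/eqP dw /eqP gw]|]; last by move/(_ v); rewrite dv !eqxx.
case: Hg => H1 H2 H3.
have EF : F (bit v) =i F (bit w).
  move=> i; case: (boolP (i \in F (bit v))) => Hi.
    have iltn := Fn Hi.
    have : Ordinal iltn \notin direction (fof v) by rewrite inE ffunE /= Hi.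
    by rewrite dv -dw inE ffunE /=; case: ifP.
  case: (boolP (i \in F (bit w))) => Hj //.
  have iltn := Fn Hj.
  have : Ordinal iltn \notin direction (fof w) by rewrite inE ffunE /= Hj.
  by rewrite dw -dv inE ffunE /= (negbTE Hi).
have ag := H3 _ _ EF (esym gw).
apply/ffunP => o; rewrite !ffunE -EF; case: ifP => // Hi.
by have := ag _ Hi; rewrite !bitE => ->.
Qed.

Lemma generic_ok : exists S : {set face n},
    k_splitting k S /\
    forall D : {set 'I_n}, #|[set a in S | direction a == D]| <= 2.
Proof.
exists Sg; split; last exact: Sg_dir.
split; first exact: Sg_card.
  by move=> a /imsetP [v _ ->]; exact: fof_dim.
apply/setP => v; rewrite inE; apply/bigcupP; exists (fof v); last exact: fof_in.
exact: imset_f.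
Qed.
End Generic.

Definition cross (F0 : (nat -> bool) -> seq nat) (g0 : (nat -> bool) -> bool)
  (F1 : (nat -> bool) -> seq nat) (g1 : (nat -> bool) -> bool) :=
  forall b b', F0 b =i F1 b' -> g0 b != g1 b' :> bool.

Lemma cross_sym F0 g0 F1 g1 : cross F0 g0 F1 g1 -> cross F1 g1 F0 g0.
Proof. by move=> H b b' E; rewrite eq_sym; apply: H => i; rewrite E. Qed.

Lemma all_lt_notin m x (l : seq nat) : all (fun i => i < m) l -> m <= x -> x \notin l.
Proof. by move=> /allP H mx; apply/negP => /H; lia. Qed.

Lemma good_mono m m' k F g : good m k F g -> m <= m' -> good m' k F g.
Proof.
case=> H1 H2 H3 mm; split => // b; case/and3P: (H1 b) => /allP al u sz; rewrite u sz !andbT.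
by apply/allP => i /al; lia.
Qed.

Lemma strip (x : nat) l l' : x \notin l -> x \notin l' -> x :: l =i x :: l' -> l =i l'.
Proof.
move=> xl xl' E i; have := E i; rewrite !inE.
by case: eqP => [->|] //; rewrite (negbTE xl) (negbTE xl').
Qed.

Lemma good_node m k x F0 g0 F1 g1 :
  good m k F0 g0 -> good m k F1 g1 -> m <= x -> cross F0 g0 F1 g1 ->
  good x.+1 k.+1 (fun b => x :: (if b x then F1 b else F0 b))
                 (fun b => if b x then g1 b else g0 b).
Proof.
case=> A1 A2 A3 [B1 B2 B3] mx C.
have nin : forall b, x \notin (if b x then F1 b else F0 b).
  move=> b; case: (b x).
    by case/and3P: (B1 b) => al _ _; exact: all_lt_notin al mx.
  by case/and3P: (A1 b) => al _ _; exact: all_lt_notin al mx.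
split.
- move=> b /=; rewrite ltnSn /= nin /=.
  have H : forall F g, good m k F g -> [&& all (fun i => i < x.+1) (F b), uniq (F b) & size (F b) == k].
    move=> F g Hg'; have mx1 : m <= x.+1 by lia.
    by case: (good_mono Hg' mx1) => H _ _; exact: H.
  by case: (b x); [have := H _ _ (And3 B1 B2 B3) | have := H _ _ (And3 A1 A2 A3)].
- move=> b b' ag /=.
  have bx : b' x = b x by apply: ag; rewrite inE eqxx.
  have ag' : {in (if b x then F1 b else F0 b), b' =1 b}.
    by move=> i Hi; apply: ag; rewrite inE Hi orbT.
  rewrite bx => i; rewrite !inE; congr (_ || _).
  by move: ag'; case: (b x) => ag'; [apply: B2 | apply: A2].
- move=> b b' /= E ge i.
  have E' := strip (nin b) (nin b') E.
  rewrite inE => /orP [/eqP -> |Hi].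
    move: E' ge; case bx: (b x); case b'x: (b' x) => // E' ge.
    + by have := C _ _ (fun i => esym (E' i)); rewrite ge eqxx.
    + by have := C _ _ E'; rewrite ge eqxx.
  move: Hi E' ge; case bx: (b x); case b'x: (b' x) => Hi E' ge.
  + exact: B3 E' ge _ Hi.
  + by have := C _ _ (fun i => esym (E' i)); rewrite ge eqxx.
  + by have := C _ _ E'; rewrite ge eqxx.
  + exact: A3 E' ge _ Hi.
Qed.

Lemma strip_gen m (p l l' : seq nat) : p ++ l =i p ++ l' ->
  all (fun i => i < m) l -> all (fun i => i < m) l' -> all (fun i => m <= i) p -> l =i l'.
Proof.
move=> E al al' ap i; have := E i; rewrite !mem_cat.
case: (boolP (i \in p)) => // /(allP ap) mi _.
by rewrite (negbTE (all_lt_notin al mi)) (negbTE (all_lt_notin al' mi)).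
Qed.

Lemma part_ok m M k (p l : seq nat) :
  [&& all (fun i => i < m) l, uniq l & size l == k] -> uniq p ->
  all (fun i => m <= i) p -> all (fun i => i < M) p -> m <= M ->
  [&& all (fun i => i < M) (p ++ l), uniq (p ++ l) & size (p ++ l) == size p + k].
Proof.
case/and3P => al ul /eqP sl up pm pM mM.
rewrite all_cat pM cat_uniq up ul size_cat sl eqxx /= !andbT.
apply/andP; split.
  by apply/allP => i /(allP al) => h; lia.
apply/hasPn => i /(allP al) => h; apply/negP => /(allP pm); lia.
Qed.

Definition pcat (p l : seq nat) := p ++ l.
Arguments pcat : simpl never.
Lemma mem_pcat p l i : (i \in pcat p l) = (i \in p) || (i \in l).
Proof. exact: mem_cat. Qed.

Section Wind.
Variable j : nat.
Variables (T E Fm : (nat -> bool) -> seq nat) (gT gE gF : (nat -> bool) -> bool).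
Hypotheses (HT : good (2*j).+1 j.+1 T gT) (HE : good (2*j).+1 j E gE)
  (HF : good (2*j).+1 j Fm gF) (C : cross E gE Fm gF).

Let z := (2*j).+1.
Let x := (2*j).+2.
Let y := (2*j).+3.

Definition W (b : nat -> bool) : seq nat :=
  if ~~ b x && ~~ b y then pcat [:: x; y] (T b)
  else if b z then (if b x then pcat [:: z; x] (T b) else pcat [:: z; x; y] (Fm b))
  else (if b y then pcat [:: z; y] (T b) else pcat [:: z; x; y] (E b)).

Definition gW (b : nat -> bool) : bool :=
  if ~~ b x && ~~ b y then gT b
  else if b z then (if b x then gT b else gF b)
  else (if b y then gT b else gE b).

Lemma allG m k F g b : good m k F g -> all (fun i => i < m) (F b).
Proof. by case=> H _ _; case/and3P: (H b). Qed.

Lemma ninG m k F g b i : good m k F g -> m <= i -> (i \in F b) = false.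
Proof. by move=> H mi; apply/negbTE; apply: all_lt_notin (allG b H) mi. Qed.

Ltac pre H := first [ move/orP: H => [/eqP-> | H]; [congruence | pre H] | move/eqP: H => ->; congruence ].

Lemma good_W : good (2*j).+4 j.+3 W gW.
Proof.
have aT := fun b => allG b HT; have aE := fun b => allG b HE; have aF := fun b => allG b HF.
have nT := fun b i => @ninG _ _ _ _ b i HT.
have nE := fun b i => @ninG _ _ _ _ b i HE.
have nF := fun b i => @ninG _ _ _ _ b i HF.
case: HT => T1 T2 T3; case: HE => E1 E2 E3; case: HF => F1 F2 F3.
have exy : (x == y) = false by rewrite /x /y; lia.
have eyx : (y == x) = false by rewrite /x /y; lia.
have exz : (x == z) = false by rewrite /x /z; lia.
have ezx : (z == x) = false by rewrite /x /z; lia.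
have eyz : (y == z) = false by rewrite /y /z; lia.
have ezy : (z == y) = false by rewrite /y /z; lia.
have nTx b : (x \in T b) = false by apply: nT; rewrite /x; lia.
have nTy b : (y \in T b) = false by apply: nT; rewrite /y; lia.
have nTz b : (z \in T b) = false by apply: nT; rewrite /z; lia.
have nEx b : (x \in E b) = false by apply: nE; rewrite /x; lia.
have nEy b : (y \in E b) = false by apply: nE; rewrite /y; lia.
have nEz b : (z \in E b) = false by apply: nE; rewrite /z; lia.
have nFx b : (x \in Fm b) = false by apply: nF; rewrite /x; lia.
have nFy b : (y \in Fm b) = false by apply: nF; rewrite /y; lia.
have nFz b : (z \in Fm b) = false by apply: nF; rewrite /z; lia.
have pxy : all (fun i => (2*j).+1 <= i) [:: x; y] by rewrite /= /x /y; lia.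
have pzx : all (fun i => (2*j).+1 <= i) [:: z; x] by rewrite /= /x /z; lia.
have pzy : all (fun i => (2*j).+1 <= i) [:: z; y] by rewrite /= /y /z; lia.
have pzxy : all (fun i => (2*j).+1 <= i) [:: z; x; y] by rewrite /= /x /y /z; lia.
split.
- move=> b; rewrite /W.
  case: (b x); case: (b y); case: (b z); cbv beta iota delta [negb andb];
  first [apply: part_ok (T1 b) _ _ _ _ | apply: part_ok (E1 b) _ _ _ _ | apply: part_ok (F1 b) _ _ _ _];
  rewrite /= ?inE /z /x /y; lia.
- move=> b b'; rewrite /W.
  case bx: (b x); case bY: (b y); case bz: (b z); cbv beta iota delta [negb andb] => ag;
  (try have ex : b' x = b x by apply: ag; rewrite mem_pcat !inE eqxx ?orbT);
  (try have ey : b' y = b y by apply: ag; rewrite mem_pcat !inE eqxx ?orbT);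
  (try have ez : b' z = b z by apply: ag; rewrite mem_pcat !inE eqxx ?orbT);
  rewrite ?ex ?ey ?ez ?bx ?bY ?bz; cbv beta iota delta [negb andb];
  case: (b' x); case: (b' y); case: (b' z); cbv beta iota;
  move=> i; rewrite !mem_pcat;
  first [rewrite (T2 b b') | rewrite (E2 b b') | rewrite (F2 b b')] => // i0 Hi;
  by apply: ag; rewrite mem_pcat Hi orbT.
- move=> b b'; rewrite /W /gW.
  case bx: (b x); case bY: (b y); case bz: (b z); case b'x: (b' x); case b'y: (b' y); case b'z: (b' z);
  cbv beta iota delta [negb andb] => EE ge;
  have hx := EE x; have hy := EE y; have hz := EE z;
  rewrite !mem_pcat !inE ?eqxx ?exy ?eyx ?exz ?ezx ?eyz ?ezy ?nTx ?nTy ?nTz ?nEx ?nEy ?nEz ?nFx ?nFy ?nFz /= in hx hy hz;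
  try discriminate;
  try first [ have Es := strip_gen EE (aT b) (aT b') ltac:(first [exact pxy | exact pzx | exact pzy | exact pzxy])
        | have Es := strip_gen EE (aE b) (aE b') ltac:(first [exact pxy | exact pzx | exact pzy | exact pzxy])
        | have Es := strip_gen EE (aF b) (aF b') ltac:(first [exact pxy | exact pzx | exact pzy | exact pzxy])
        | have Es := strip_gen EE (aE b) (aF b') ltac:(first [exact pxy | exact pzx | exact pzy | exact pzxy])
        | have Es := strip_gen EE (aF b) (aE b') ltac:(first [exact pxy | exact pzx | exact pzy | exact pzxy]) ];
  try first [ by move: (C Es); rewrite ge eqxx
        | by move: (cross_sym C Es); rewrite ge eqxx
        | move=> i; rewrite mem_pcat !inE => /orP [H|H];
          [ pre H | first [exact: T3 Es ge _ H | exact: E3 Es ge _ H | exact: F3 Es ge _ H]] ].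
Qed.
End Wind.

Fixpoint PP (j : nat) (b : nat -> bool) : (seq nat * bool) * (seq nat * bool) :=
  match j with
  | 0 => (([::], false), ([::], true))
  | j'.+1 => let p := PP j' b in
    ((2 * j' :: (if b (2 * j') then p.2.1 else p.1.1),
      if b (2 * j') then p.2.2 else p.1.2),
     ((2 * j').+1 :: (if b (2 * j').+1 then p.1.1 else p.2.1),
      if b (2 * j').+1 then p.1.2 else p.2.2))
  end.

Definition PA j b := (PP j b).1.1.
Definition gPA j b := (PP j b).1.2.
Definition PB j b := (PP j b).2.1.
Definition gPB j b := (PP j b).2.2.

Lemma pair_good j :
  [/\ good (2 * j) j (PA j) (gPA j), good (2 * j) j (PB j) (gPB j)
    & cross (PA j) (gPA j) (PB j) (gPB j)].
Proof.
elim: j => [|j [GA GB C]].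
  split => //; split => // b b' _ _ i //.
have NA := good_node GA GB (leqnn _) C.
have NB := good_node GB GA (leqnSn _) (cross_sym C).
split.
- by apply: good_mono NA _; lia.
- by apply: good_mono NB _; lia.
- move=> b b' E; have := E (2 * j); rewrite /PA /PB /= !inE eqxx /=.
  have h1 : ((2 * j) == (2 * j).+1) = false by lia.
  rewrite h1 /=.
  case: (b' (2 * j).+1).
    by rewrite (ninG _ GA) //.
  by rewrite (ninG _ GB) //.
Qed.

Lemma tree_good k : good (2 * k).+1 k.+1
   (fun b => 2 * k :: (if b (2 * k) then PB k b else PA k b))
   (fun b => if b (2 * k) then gPB k b else gPA k b).
Proof. by case: (pair_good k) => GA GB C; exact: good_node GA GB (leqnn _) C. Qed.

Unset Implicit Arguments.

Theorem proposition6 (n k : nat) :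
  0 < k -> k < n -> 2 * k <= n + 2 ->
  exists S : {set face n},
    k_splitting k S /\
    forall D : {set 'I_n}, #|[set a in S | direction a == D]| <= 2.
Proof.
move=> k0 kn hk.
have kn' : k <= n by lia.
case: (leqP (2 * k) n.+1) => hk2.
  case: k k0 kn hk hk2 kn' => [//|k'] _ _ _ hk2 kn'.
  have Hm : (2 * k').+1 <= n by lia.
  exact: generic_ok (tree_good k') Hm kn'.
have [j kj] : exists j, k = j.+3 by exists (k - 3); lia.
subst k.
have Hm : (2 * j).+4 <= n by lia.
case: (pair_good j) => GA GB C.
have GA' : good (2 * j).+1 j (PA j) (gPA j) by apply: good_mono GA _.
have GB' : good (2 * j).+1 j (PB j) (gPB j) by apply: good_mono GB _.
have := good_W (tree_good j) GA' GB' C.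
move=> GW; apply: generic_ok GW Hm _; lia.
Qed.
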